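(* Let $n,N\in\mathbb N$, $I=\{1,\dots,n\}$, $J=\{1,\dots,N\}$, and let $a=(a_{ij})\in\mathbb R^{n\times N}$. Let $G$ be a nonempty finite set of maps from $I$ to $J$, and let $C_G>0$ be a constant depending only on $G$. Assume that for all $i\in I$, $j\in J$ and all pairs $(i_1,j_1)\neq(i_2,j_2)$ in $I\times J$: (i) $\mathbb P(\{g\in G: g(i)=j\})=1/N$; (ii) $\mathbb P(\{g\in G: g(i_1)=j_1,\ g(i_2)=j_2\})\le C_G/N^2$. Then for every integer $1\le \ell\le n$, $$\frac{c}{N}\sum_{j=1}^{\ell N}s(j)\;\le\;\int_G\sum_{k=1}^{\ell}\operatorname{k\text{-}max}_{1\le i\le n}|a_{i g(i)}|\,d\mathbb P(g)\;\le\;\frac{2}{N}\sum_{j=1}^{\ell N}s(j),$$ where $c=2^{-5}(1+2C_G)^{-2}$.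
   Context: $\mathbb P$ denotes the normalized counting measure on $G$, i.e. $\mathbb P(E)=|E|/|G|$ for $E\subseteq G$. $(s(k))_{k=1}^{nN}$ is the non-increasing rearrangement of the $nN$ numbers $(|a_{ij}|)_{i\in I,j\in J}$ (so $s(1)$ is the largest). For a vector $x\in\mathbb R^n$ with non-negative entries, $\operatorname{k\text{-}max}_{1\le i\le n}x_i$ denotes the $k$-th largest entry of $x$ counted with multiplicity, i.e. the $k$-th entry of the non-increasing rearrangement of $x$. *)

(* Defs.v *)
(* Reals are modelled by an arbitrary realFieldType R
   (the statement is purely order-algebraic). *)
From HB Require Import structures.
From mathcomp Require Import all_boot all_order all_algebra.
Set Implicit Arguments. Unset Strict Implicit. Unset Printing Implicit Defensive.
Import Order.TTheory GRing.Theory Num.Theory.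
Local Open Scope ring_scope.

Definition decr_sort (R : realFieldType) (s : seq R) : seq R :=
  sort (fun x y : R => y <= x) s.

(* k-max (k is 1-based): the k-th largest entry counted with multiplicity *)
Definition kmax (R : realFieldType) (k : nat) (s : seq R) : R :=
  nth 0 (decr_sort s) k.-1.

(* s(k), 1-based: the non-increasing rearrangement of (|a_ij|)_{i,j} *)
Definition srearr (R : realFieldType) (n N : nat) (a : 'M[R]_(n, N)) (k : nat) : R :=
  nth 0 (decr_sort [seq `|a p.1 p.2| | p : 'I_n * 'I_N]) k.-1.

Definition Prob (n N : nat) (R : realFieldType)
  (G : {set {ffun 'I_n -> 'I_N}}) (E : {set {ffun 'I_n -> 'I_N}}) : R :=
  #|E|%:R / #|G|%:R.

Definition integral (n N : nat) (R : realFieldType)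
  (G : {set {ffun 'I_n -> 'I_N}}) (f : {ffun 'I_n -> 'I_N} -> R) : R :=
  (\sum_(g in G) f g) / #|G|%:R.

(* Main.v *)
Require Import Defs.
From HB Require Import structures.
From mathcomp Require Import all_boot all_order all_algebra.
From mathcomp Require Import ring lra.
Import Order.TTheory GRing.Theory Num.Theory.
Local Open Scope ring_scope.

Lemma top_b (R : realFieldType) (T : finType) (v : T -> R) (m : nat) :
  (m <= #|T|)%N -> exists B : {set T}, [/\ #|B| = m,
   \sum_(k < m) nth 0 (decr_sort (map v (enum T))) k = \sum_(x in B) v x &
   forall x y, x \notin B -> y \in B -> v x <= v y].
Proof.
move=> hm.
set r := relpre v (fun x y : R => y <= x).
set e := sort r (enum T).
have eu : uniq e by rewrite sort_uniq enum_uniq.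
have se : size e = #|T| by rewrite size_sort cardE.
have Hd : decr_sort (map v (enum T)) = map v e by rewrite /decr_sort sort_map.
exists [set x in take m e]; split.
- rewrite cardsE; move/card_uniqP: (take_uniq m eu) => ->.
  rewrite size_take se.
  by case: ltnP => // h; apply/anti_leq; rewrite h hm.
- rewrite Hd.
  rewrite (eq_bigl (fun x => x \in take m e)); last by move=> x; rewrite inE.
  rewrite -big_uniq ?take_uniq //.
  rewrite -(big_map v xpredT (fun y => y)) map_take (big_nth 0) size_take size_map se.
  have -> : (if (m < #|T|)%N then m else #|T|) = m.
    by case: ltnP => // h; apply/anti_leq; rewrite h hm.
  rewrite big_mkord; apply: eq_bigr => i _; by rewrite nth_take.
- have tr : transitive r by move=> x y z /= h1 h2; apply: le_trans h2 h1.
  have to : total r by move=> x y /=; apply: le_total.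
  have pe : pairwise r e by rewrite -sorted_pairwise // sort_sorted.
  have : pairwise r (take m e ++ drop m e) by rewrite cat_take_drop.
  rewrite pairwise_cat => /and3P [/allrelP H _ _].
  move=> x y; rewrite !inE => hx hy.
  have xe : x \in e by rewrite mem_sort mem_enum.
  have xd : x \in drop m e.
    by move: xe; rewrite -{1}(cat_take_drop m e) mem_cat (negbTE hx).
  exact: (H y x hy xd).
Qed.
Lemma thr (R : realFieldType) (T : finType) (v : T -> R) (A : {set T}) :
  (forall x, 0 <= v x) -> (forall x y, x \notin A -> y \in A -> v x <= v y) ->
  exists tau, [/\ 0 <= tau, forall x, x \notin A -> v x <= tau &
                            forall y, y \in A -> tau <= v y].
Proof.
move=> v0 hA.
exists (\big[Num.max/0]_(x | x \notin A) v x); split.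
- by apply: (big_ind (fun y => 0 <= y)) => // a b ha hb; rewrite le_max ha.
- by move=> x hx; apply: le_bigmax_cond.
- move=> y hy; apply: bigmax_le => //. by move=> x hx; apply: hA.
Qed.

Lemma sum_le_const (R : realFieldType) (T : finType) (v : T -> R) (S : {set T}) t :
  (forall x, x \in S -> v x <= t) -> \sum_(x in S) v x <= #|S|%:R * t.
Proof.
move=> h; apply: le_trans (ler_sum _ h) _.
by rewrite sumr_const mulr_natl.
Qed.

Lemma sum_ge_const (R : realFieldType) (T : finType) (v : T -> R) (S : {set T}) t :
  (forall x, x \in S -> t <= v x) -> #|S|%:R * t <= \sum_(x in S) v x.
Proof.
move=> h; apply: le_trans _ (ler_sum _ h).
by rewrite sumr_const mulr_natl.
Qed.

Lemma top_a (R : realFieldType) (T : finType) (v : T -> R) (m : nat) (B : {set T}) (r : R) :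
  (forall x, 0 <= v x) -> (m <= #|T|)%N -> r <= 1 -> r * #|B|%:R <= m%:R ->
  r * \sum_(x in B) v x <= \sum_(k < m) nth 0 (decr_sort (map v (enum T))) k.
Proof.
move=> v0 hm r1 rB.
have [T1 [c1 -> hT1]] := @top_b R T v m hm.
have [tau [t0 tle tge]] := @thr R T v T1 v0 hT1.
have s0 : forall S : {set T}, 0 <= \sum_(x in S) v x.
  by move=> S; apply: sumr_ge0 => x _.
rewrite (@big_setID _ _ _ _ T1 B) (@big_setID _ _ _ _ B T1) /= (setIC T1 B).
set s1 := \sum_(x in B :&: T1) v x.
set s2 := \sum_(x in B :\: T1) v x.
set s3 := \sum_(x in T1 :\: B) v x.
have h2 : s2 <= #|B :\: T1|%:R * tau.
  by apply: sum_le_const => x; rewrite inE => /andP [hx _]; apply: tle.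
have h3 : #|T1 :\: B|%:R * tau <= s3.
  by apply: sum_ge_const => x; rewrite inE => /andP [_ hx]; apply: tge.
have h1 : #|B :&: T1|%:R * tau <= s1.
  by apply: sum_ge_const => x; rewrite inE => /andP [_ hx]; apply: tge.
have cB : #|B|%:R = #|B :&: T1|%:R + #|B :\: T1|%:R :> R.
  by rewrite -natrD cardsID.
have cT : m%:R = #|B :&: T1|%:R + #|T1 :\: B|%:R :> R.
  by rewrite -c1 -(cardsID B T1) setIC natrD.
move: rB; rewrite cB cT.
set p := #|B :&: T1|%:R. set k2 := #|B :\: T1|%:R. set k3 := #|T1 :\: B|%:R.
have p0 : 0 <= p by rewrite ler0n.
have k20 : 0 <= k2 by rewrite ler0n.
have S1 : 0 <= s1 := s0 _. have S2 : 0 <= s2 := s0 _. have S3 : 0 <= s3 := s0 _.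
move=> rB.
have [r0|r0] := leP 0 r; last first.
  have : r * (s1 + s2) <= 0 by rewrite nmulr_rle0 // addr_ge0.
  move=> h; lra.
have e1 : r * s2 <= r * (k2 * tau) by rewrite ler_wpM2l.
have e2 : r * (k2 * tau) <= (k3 + p - r * p) * tau.
  rewrite mulrA; apply: ler_wpM2r => //.
  move: rB; rewrite mulrDr; set rk := r * k2; set rp := r * p; move=> rB; lra.
have e3 : (1 - r) * (p * tau) <= (1 - r) * s1 by rewrite ler_wpM2l // subr_ge0.
have e4 : r * s2 <= s3 + (1 - r) * s1.
  apply: le_trans e1 _; apply: le_trans e2 _.
  have -> : (k3 + p - r * p) * tau = k3 * tau + (1 - r) * (p * tau) by ring.
  exact: lerD.
have -> : r * (s1 + s2) = r * s1 + r * s2 by ring.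
have -> : s1 + s3 = r * s1 + (s3 + (1 - r) * s1) by ring.
exact: lerD.
Qed.

Lemma card_sum (R : realFieldType) (T : finType) (G : {set T}) (P : pred T) :
  \sum_(g in G) (P g)%:R = #|[set g in G | P g]|%:R :> R.
Proof.
rewrite (eq_bigr (fun g => if P g then 1 else 0)); last by move=> g _; case: (P g).
rewrite -big_mkcondr /=.
rewrite (eq_bigl (fun g => g \in [set g in G | P g])); last by move=> g; rewrite inE.
by rewrite sumr_const.
Qed.

Lemma sum_sub_le (R : realFieldType) (T : finType) (A : pred T) (P : pred T) (f : T -> R) :
  (forall x, 0 <= f x) -> \sum_(x in A | P x) f x <= \sum_(x in A) f x.
Proof.
move=> f0; rewrite [X in _ <= X](bigID P) /= lerDl.
by apply: sumr_ge0.
Qed.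

Lemma reindex1 (R : realFieldType) (m : nat) (F : nat -> R) :
  \sum_(1 <= k < m.+1) F k = \sum_(k < m) F k.+1.
Proof. by rewrite big_add1 /= big_mkord. Qed.

Lemma pair_ident (R : realFieldType) (n N : nat) (A : {set 'I_n * 'I_N})
  (g : {ffun 'I_n -> 'I_N}) (h : 'I_n -> 'I_N -> R) :
  \sum_(p in A) h p.1 p.2 * (g p.1 == p.2)%:R =
  \sum_(i < n | (i, g i) \in A) h i (g i).
Proof.
rewrite big_mkcond /=.
transitivity (\sum_i \sum_j (if (i, j) \in A then h i j * (g i == j)%:R else 0)).
  by rewrite pair_bigA; apply: eq_bigr => -[i j].
rewrite [RHS]big_mkcond /=; apply: eq_bigr => i _.
rewrite (bigD1 (g i)) //= eqxx mulr1 big1 ?addr0 // => j hj.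
by rewrite eq_sym (negbTE hj) mulr0; case: ifP.
Qed.

Theorem theorem1p1 (R : realFieldType) (n N : nat) (a : 'M[R]_(n, N))
  (G : {set {ffun 'I_n -> 'I_N}}) (CG : R)
  (HG : G != set0) (HC : 0 < CG)
  (H1 : forall (i : 'I_n) (j : 'I_N),
      Prob R G [set g in G | g i == j] = 1 / N%:R)
  (H2 : forall (i1 i2 : 'I_n) (j1 j2 : 'I_N), (i1, j1) != (i2, j2) ->
      Prob R G [set g in G | (g i1 == j1) && (g i2 == j2)] <= CG / (N%:R ^+ 2))
  (l : nat) (Hl1 : (1 <= l)%N) (Hln : (l <= n)%N) :
  let c := ((2 : R) ^+ 5)^-1 * ((1 + 2 * CG) ^+ 2)^-1 in
  let I := integral G (fun g => \sum_(1 <= k < l.+1)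
                         kmax k [seq `|a i (g i)| | i <- enum 'I_n]) in
  let S := \sum_(1 <= j < (l * N).+1) srearr a j in
  c / N%:R * S <= I /\ I <= 2 / N%:R * S.
Proof.
move=> c I S.
have [g0 g0G] : exists g, g \in G by apply/set0Pn.
have n0 : (0 < n)%N by apply: leq_trans Hln.
have N0 : (0 < N)%N by have := ltn_ord (g0 (Ordinal n0)); apply: leq_ltn_trans.
set nG := #|G|%:R : R.
have nG0 : 0 < nG by rewrite /nG ltr0n card_gt0.
set NR := N%:R : R.
have NR0 : 0 < NR by rewrite /NR ltr0n.
set L := l%:R : R.
have L1 : 1 <= L by rewrite /L ler1n.
set v := fun p : 'I_n * 'I_N => `|a p.1 p.2|.
have v0 : forall p, 0 <= v p by move=> p; rewrite /v normr_ge0.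
have hS : S = \sum_(k < l * N) nth 0 (decr_sort (map v (enum {: 'I_n * 'I_N}))) k.
  by rewrite /S /srearr reindex1.
have hmT : (l * N <= #|{: 'I_n * 'I_N}|)%N.
  by rewrite card_prod !card_ord leq_mul2r Hln orbT.
have [A [cA SA hA]] := @top_b R _ v _ hmT.
rewrite SA in hS.
have S0 : 0 <= S by rewrite hS; apply: sumr_ge0.
have [tau [t0 tle tge]] := @thr R _ v A v0 hA.
have P1 : forall i j, \sum_(g in G) (g i == j)%:R = nG / NR.
  move=> i j; rewrite card_sum; have := H1 i j; rewrite /Prob => h.
  have := congr1 (fun x => x * nG) h; rewrite /= mulfVK ?gt_eqF // => ->.
  by rewrite mul1r mulrC.
have P2 : forall p q, p != q ->
    \sum_(g in G) ((g p.1 == p.2)%:R * (g q.1 == q.2)%:R) <= CG / NR ^+ 2 * nG.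
  move=> p q hpq.
  rewrite (eq_bigr (fun g : {ffun 'I_n -> 'I_N} => ((g p.1 == p.2) && (g q.1 == q.2))%:R)); last first.
    by move=> g _; rewrite -natrM mulnb.
  rewrite card_sum -ler_pdivrMr //.
  by apply: H2; move: hpq; case: p => ??; case: q.
set w := fun (g : {ffun 'I_n -> 'I_N}) (i : 'I_n) => `|a i (g i)|.
have w0 : forall g i, 0 <= w g i by move=> g i; rewrite /w normr_ge0.
set W := fun g : {ffun 'I_n -> 'I_N} =>
  \sum_(k < l) nth 0 (decr_sort (map (w g) (enum 'I_n))) k.
have hI : I = (\sum_(g in G) W g) / nG.
  rewrite /I /integral; congr (_ / _); apply: eq_bigr => g _.
  by rewrite reindex1.
set X := fun g : {ffun 'I_n -> 'I_N} => \sum_(p in A) v p * (g p.1 == p.2)%:R.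
have hX : forall g, X g = \sum_(i < n | (i, g i) \in A) w g i.
  by move=> g; rewrite /X /v (@pair_ident R n N A g (fun i j => `|a i j|)).
have sX : \sum_(g in G) X g = S * nG / NR.
  rewrite /X exchange_big /=.
  rewrite (eq_bigr (fun p => v p * (nG / NR))); last first.
    by move=> p _; rewrite -mulr_sumr P1.
  by rewrite -mulr_suml -hS mulrA.
have hln : (l <= #|'I_n|)%N by rewrite card_ord.
split; last first.
  have Wup : forall g, W g <= X g + L * tau.
    move=> g; rewrite /W.
    have [B [cB -> hB]] := @top_b R _ (w g) l hln.
    apply: (@le_trans _ _ (\sum_(i in B) (w g i * ((i, g i) \in A)%:R + tau))).
      apply: ler_sum => i _.
      case hi: ((i, g i) \in A); rewrite /= ?mulr1 ?mulr0 ?add0r.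
        by rewrite lerDl.
      by apply: (tle (i, g i)); rewrite hi.
    rewrite big_split /= sumr_const cB -mulr_natl lerD2r hX.
    rewrite [X in _ <= X]big_mkcond /=.
    apply: (@le_trans _ _ (\sum_i (w g i * ((i, g i) \in A)%:R))).
      by rewrite [X in _ <= X](bigID (mem B)) /= lerDl; apply: sumr_ge0 => i _;
        rewrite mulr_ge0.
    by apply: ler_sum => i _; case: ((i, g i) \in A); rewrite ?mulr1 ?mulr0.
  have sW : \sum_(g in G) W g <= S * nG / NR + nG * (L * tau).
    apply: le_trans (ler_sum _ (fun g _ => Wup g)) _.
    by rewrite big_split /= sX sumr_const -mulr_natl.
  have lt : (l * N)%:R * tau <= S.
    rewrite hS -cA; apply: sum_ge_const => p hp; exact: tge.
  rewrite hI ler_pdivrMr //.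
  apply: le_trans sW _.
  rewrite natrM -/L -/NR mulrAC in lt.
  have h : L * tau <= S / NR by rewrite ler_pdivlMr.
  have -> : S * nG / NR = S / NR * nG by rewrite mulrAC.
  have -> : 2 / NR * S * nG = 2 * (S / NR) * nG by ring.
  move: h; set q := S / NR; set u := L * tau => h.
  nra.
set E := 1 + 2 * CG.
have E1 : 1 <= E by rewrite /E; lra.
set t := (2 * E)^-1.
have tp : 0 < t by rewrite /t invr_gt0; lra.
have t2E : t * (2 * E) = 1 by rewrite /t mulVf //; lra.
have th : t <= 2^-1.
  rewrite /t lef_pV2 ?posrE; lra.
pose K (g : {ffun 'I_n -> 'I_N}) : R := \sum_(p in A) (g p.1 == p.2)%:R.
have K0 : forall g, 0 <= K g by move=> g; apply: sumr_ge0 => p _.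
have X0 : forall g, 0 <= X g.
  by move=> g; apply: sumr_ge0 => p _; rewrite mulr_ge0.
have Wlo : forall g, 2 * t * X g - t ^+ 2 / L * (K g * X g) <= W g.
  move=> g; set Bg := [set i | (i, g i) \in A].
  have hXB : X g = \sum_(i in Bg) w g i.
    by rewrite hX; apply: eq_bigl => i; rewrite inE.
  have hKB : K g = #|Bg|%:R.
    rewrite /K; transitivity (\sum_(p in A) 1 * (g p.1 == p.2)%:R :> R).
      by apply: eq_bigr => p _; rewrite mul1r.
    rewrite (@pair_ident R n N A g (fun _ _ => 1)) /=.
    rewrite (eq_bigl (fun i => i \in Bg)); last by move=> i; rewrite inE.
    by rewrite sumr_const.
  set r := 2 * t - t ^+ 2 * K g / L.
  have -> : 2 * t * X g - t ^+ 2 / L * (K g * X g) = r * X g.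
    by rewrite /r; ring.
  rewrite hXB /W; apply: top_a => //.
  - rewrite /r.
    have : 0 <= t ^+ 2 * K g / L by rewrite divr_ge0 ?mulr_ge0 ?sqr_ge0 //; lra.
    lra.
  - rewrite -hKB /r.
    have L0 : L != 0 by rewrite gt_eqF //; lra.
    have -> : (2 * t - t ^+ 2 * K g / L) * K g = L - (L - t * K g) ^+ 2 / L.
      by field.
    rewrite lerBlDr lerDl divr_ge0 ?sqr_ge0 //; lra.
pose M := nG / NR + (l * N)%:R * (CG / NR ^+ 2 * nG).
have Qb : forall p, p \in A ->
    \sum_(q in A) \sum_(g in G) ((g p.1 == p.2)%:R * (g q.1 == q.2)%:R) <= M.
  move=> p hp; rewrite (bigD1 p) //= /M.
  apply: lerD.
    rewrite (eq_bigr (fun g : {ffun 'I_n -> 'I_N} => (g p.1 == p.2)%:R)) ?P1 //.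
    by move=> g _; case: (g p.1 == p.2); rewrite ?mulr1 ?mulr0.
  apply: (@le_trans _ _ (\sum_(q in A | q != p) (CG / NR ^+ 2 * nG))).
    by apply: ler_sum => q /andP [_ hq]; apply: P2; rewrite eq_sym.
  have c0 : 0 <= CG / NR ^+ 2 * nG.
    by rewrite mulr_ge0 ?divr_ge0 ?exprn_ge0 //; lra.
  apply: (@le_trans _ _ (\sum_(q in A) (CG / NR ^+ 2 * nG))).
    by apply: sum_sub_le => _.
  by rewrite sumr_const cA mulr_natl.
have sKX : \sum_(g in G) K g * X g <= S * M.
  have KX : forall g, K g * X g =
      \sum_(p in A) v p * \sum_(q in A) ((g p.1 == p.2)%:R * (g q.1 == q.2)%:R).
    move=> g; rewrite /K /X mulrC mulr_suml; apply: eq_bigr => p _.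
    rewrite -mulrA; congr (_ * _); rewrite mulr_sumr; done.
  rewrite (eq_bigr _ (fun g _ => KX g)) exchange_big /= hS mulr_suml.
  apply: ler_sum => p hp.
  rewrite -mulr_sumr ler_wpM2l // exchange_big /=.
  exact: Qb.
have sWlo : 2 * t * (S * nG / NR) - t ^+ 2 / L * (S * M) <= \sum_(g in G) W g.
  apply: le_trans _ (ler_sum _ (fun g _ => Wlo g)).
  rewrite sumrB -!mulr_sumr sX.
  rewrite lerD2l lerN2.
  by rewrite ler_wpM2l // divr_ge0 ?sqr_ge0 //; lra.
rewrite hI ler_pdivlMr //.
apply: le_trans sWlo.
have NRn : NR != 0 by rewrite gt_eqF.
have Ln : L != 0 by rewrite gt_eqF //; lra.
have En : E != 0 by rewrite gt_eqF //; lra.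
have hM : M = nG / NR * (1 + L * CG).
  by rewrite /M natrM -/L -/NR; field.
have hc : c = t ^+ 2 / 8 by rewrite /c /t -/E; field.
rewrite hM hc; clearbody t L.
set P := S * nG / NR.
have P0 : 0 <= P by rewrite /P divr_ge0 ?mulr_ge0 //; lra.
have -> : t ^+ 2 / 8 / NR * S * nG = P * (t ^+ 2 / 8) by rewrite /P; field.
have -> : 2 * t * P - t ^+ 2 / L * (S * (nG / NR * (1 + L * CG)))
    = P * (2 * t - t ^+ 2 / L - t * (t * CG)) by rewrite /P; field; rewrite ?Ln ?NRn ?En.
rewrite ler_wpM2l //.
have q1 : t ^+ 2 / L <= t * t.
  by rewrite ler_pdivrMr; [rewrite expr2 ler_peMr ?mulr_ge0 //; lra | lra].
have q0 : 0 <= t ^+ 2 / L by rewrite divr_ge0 ?sqr_ge0 //; lra.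
have hy : t + 2 * (t * CG) = 2^-1.
  have h : 2 * (t + 2 * (t * CG)) = 1 by rewrite -[RHS]t2E /E; ring.
  apply: (@mulfI _ 2); first by rewrite pnatr_eq0.
  by rewrite h divff // pnatr_eq0.
have y0 : 0 <= t * CG by rewrite mulr_ge0 //; lra.
move: q1 q0 hy y0; set q := t ^+ 2 / L; set y := t * CG => q1 q0 hy y0.
rewrite expr2.
have : 0 <= t * (2 - t / 8 - t - y) by rewrite mulr_ge0 //; lra.
lra.
Qed.
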